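(* Let $\mathscr T$ be a functor satisfying (T1)–(T4) and $\mathfrak K=(K,\bigsqcup,\odot,{}^*,{\sim},e)$ a $\mathscr T$-based orthomodular dynamic algebra. Then $\mathfrak K$, $\mathscr P(\mathscr T(\mathbf{Lin}(\widetilde{\mathfrak K})))$ and $(\mathscr P(\mathscr T(K)),\bigcup,\boxdot,{}^\star,\boxtimes,\{e\})$ are mutually isomorphic $\mathscr T$-based orthomodular dynamic algebras.
   Context: Here $h\colon K\to\mathscr P(\mathscr T(K))$ is $h(v)=\{w\in\mathscr T(K)\mid w\sqsubseteq v\}$, and on the powerset $\mathscr P(\mathscr T(K))$: $A\boxdot B=h(\bigsqcup A\odot\bigsqcup B)$, $A^\star=h((\bigsqcup A)^* )$, $\boxtimes A=h({\sim}\bigsqcup A)$, joins are unions, unit $\{e\}$. $\widetilde{\mathfrak K}$ denotes the complete orthomodular lattice $(\widetilde K,\preceq,{}^\perp)$. An involutive unital quantale is $(Q,\bigsqcup,\odot,{}^*,e)$: complete join-semilattice $Q$ (order $\sqsubseteq$), associative $\odot$ distributing over arbitrary joins in each argument, unit $e$, ${}^*$ with $x^{**}=x$, $(x\odot y)^*=y^*\odot x^*$, $(\bigsqcup x_i)^*=\bigsqcup x_i^*$. An involutive generalized dynamic algebra (IDA) is such a quantale with ${\sim}\colon K\to K$ satisfying, for all $x,y$ and families $(x_i)$: ${\sim}(x\odot{\sim}{\sim}y)={\sim}(x\odot y)$; ${\sim}(\bigsqcup{\sim}{\sim}x_i)={\sim}(\bigsqcup x_i)$; $({\sim}x)^*={\sim}x$;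 ${\sim}{\sim}({\sim}{\sim}x\odot y)={\sim}({\sim}x\sqcup{\sim}({\sim}x\sqcup y))$. Test set $\widetilde K=\{{\sim}k\}$; $\bigvee W={\sim}{\sim}\bigsqcup W$; $w^\perp={\sim}w$; $k\preceq l$ iff $\bigvee\{k,l\}=l$; $k\bullet v={\sim}{\sim}(k\odot v)$; $k\equiv l$ iff $k\bullet w=l\bullet w$ for all $w\in\widetilde K$. IDA morphisms preserve arbitrary joins, $\odot$, ${}^*$, unit, ${\sim}$ (category $\mathbb{IDA}$); isomorphisms are bijective morphisms; semi-Foulis means $(\widetilde K,\preceq,{}^\perp)$ is a complete orthomodular lattice. $\mathbb{IM}$: involutive monoids and homomorphisms. For a complete orthomodular lattice $\mathcal M$: $\pi_m(x)=m\wedge(m^\perp\vee x)$; $\mathbf{Lin}(\mathcal M)$ is the set of maps $f$ admitting $f^*$ with $f(x)\le y^\perp\iff x\le f^*(y)^\perp$, an IDA under pointwise joins, composition, ${}^*$, $\mathrm{id}$, ${\sim}f=\pi_{f(1)^\perp}$. For an involutive submonoid $L\supseteq\{\pi_m\}$, $\mathscr P(L)$ is the IDA of subsets of $L$ with union, setwise composition and involution, unit $\{\mathrm{id}\}$, ${\sim}A=\{\pi_{(\bigvee_{a\in A}a(1))^\perp}\}$. $\mathscr T\colon\mathbb{IDA}\to\mathbb{IM}$ satisfies: (T1) $\widetilde K\subseteq\mathscr T(K)\subseteq K$, $\mathscr T(K)$ an involutive submonoid; (T2) for semi-Foulis $\mathfrak K$ with $s=t\iff s\equiv t$ on $\mathscr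 T(K)$, $k\mapsto k\bullet(-)$ is an isomorphism $\mathscr T(\mathfrak K)\to\mathscr T(\mathbf{Lin}(\widetilde{\mathfrak K}))$; (T3) $f\mapsto\{f\}$ is an isomorphism $\mathscr T(\mathbf{Lin}(\mathcal M))\to\mathscr T(\mathscr P(\mathscr T(\mathbf{Lin}(\mathcal M))))$; (T4) $\mathscr T(f)$ is the restriction of $f$. A $\mathscr T$-based orthomodular dynamic algebra is an IDA with: (TODA1) $(\widetilde K,\preceq,{}^\perp)$ a complete orthomodular lattice; (TODA2) every $A$ with $\mathscr T(K)\subseteq A\subseteq K$ closed under $\odot$, ${}^*$, arbitrary joins equals $K$; (TODA3) for $S,T\subseteq\mathscr T(K)$, $\bigsqcup S=\bigsqcup T$ iff $S=T$; (TODA4) for $s,t\in\mathscr T(K)$, $s=t$ iff $s\equiv t$. *)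

(* Defs.v *)
From Stdlib Require Import ClassicalEpsilon.
Set Implicit Arguments.
Unset Strict Implicit.

Definition image {A B : Type} (f : A -> B) (S : A -> Prop) : B -> Prop :=
  fun y => exists x, S x /\ y = f x.
Definition pair2 {A : Type} (x y : A) : A -> Prop := fun z => z = x \/ z = y.

(* Used only where (for the structures the theorem is
   about) the closure property holds; the default is then never reached. *)
Definition mksub {A : Type} (P : A -> Prop) (d : sig P) (x : A) : sig P :=
  match excluded_middle_informative (P x) with
  | left h => exist P x h
  | right _ => d
  end.
Arguments mksub {A} P d x.

(* ---------- raw IDA signature (K, ⊔, ⊙, *, ~, e) ---------- *)
Record IDAops := {
  car :> Type;
  isup : (car -> Prop) -> car;
  imul : car -> car -> car;
  istar : car -> car;
  itld : car -> car;
  iunit : car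
}.
Arguments isup : clear implicits.
Arguments imul : clear implicits.
Arguments istar : clear implicits.
Arguments itld : clear implicits.
Arguments iunit : clear implicits.

Section IDAdefs.
Variable K : IDAops.
Definition ile (x y : K) : Prop := isup K (pair2 x y) = y.
Definition ijoin (x y : K) : K := isup K (pair2 x y).

Record is_IDA : Prop := {
  ile_refl : forall x, ile x x;
  ile_anti : forall x y, ile x y -> ile y x -> x = y;
  ile_trans : forall x y z, ile x y -> ile y z -> ile x z;
  isup_ub : forall S x, S x -> ile x (isup K S);
  isup_least : forall S u, (forall x, S x -> ile x u) -> ile (isup K S) u;
  imul_assoc : forall x y z, imul K x (imul K y z) = imul K (imul K x y) z;
  imul_supr : forall x S, imul K x (isup K S) = isup K (image (imul K x) S);
  imul_supl : forall x S, imul K (isup K S) x = isup K (image (fun y => imul K y x) S);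
  imul_1l : forall x, imul K (iunit K) x = x;
  imul_1r : forall x, imul K x (iunit K) = x;
  istarK : forall x, istar K (istar K x) = x;
  istar_mul : forall x y, istar K (imul K x y) = imul K (istar K y) (istar K x);
  istar_sup : forall S, istar K (isup K S) = isup K (image (istar K) S);
  itld_ax1 : forall x y, itld K (imul K x (itld K (itld K y))) = itld K (imul K x y);
  itld_ax2 : forall S, itld K (isup K (image (fun x => itld K (itld K x)) S))
                       = itld K (isup K S);
  itld_ax3 : forall x, istar K (itld K x) = itld K x;
  itld_ax4 : forall x y, itld K (itld K (imul K (itld K (itld K x)) y))
      = itld K (ijoin (itld K x) (itld K (ijoin (itld K x) y)))
}.
End IDAdefs.

Definition ida_morphism (K L : IDAops) (f : K -> L) : Prop :=
  (forall S, f (isup K S) = isup L (image f S)) /\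
  (forall x y, f (imul K x y) = imul L (f x) (f y)) /\
  (forall x, f (istar K x) = istar L (f x)) /\
  f (iunit K) = iunit L /\
  (forall x, f (itld K x) = itld L (f x)).

Definition ida_iso (K L : IDAops) : Prop :=
  exists f : K -> L, ida_morphism f /\
    (forall x y, f x = f y -> x = y) /\ (forall y, exists x, f x = y).

Record cOL := {
  ocar :> Type;
  ole : ocar -> ocar -> Prop;
  operp : ocar -> ocar;
  osup : (ocar -> Prop) -> ocar
}.
Arguments ole : clear implicits.
Arguments operp : clear implicits.
Arguments osup : clear implicits.

Section OLdefs.
Variable M : cOL.
Definition ojoin (x y : M) : M := osup M (pair2 x y).
Definition omeet (x y : M) : M := operp M (ojoin (operp M x) (operp M y)).
Definition otop : M := osup M (fun _ => True).

Record is_cOML : Prop := {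
  ole_refl : forall x, ole M x x;
  ole_anti : forall x y, ole M x y -> ole M y x -> x = y;
  ole_trans : forall x y z, ole M x y -> ole M y z -> ole M x z;
  osup_ub : forall S x, S x -> ole M x (osup M S);
  osup_least : forall S u, (forall x, S x -> ole M x u) -> ole M (osup M S) u;
  operpK : forall x, operp M (operp M x) = x;
  operp_anti : forall x y, ole M x y -> ole M (operp M y) (operp M x);
  ojoin_perp : forall x, ojoin x (operp M x) = otop;
  orthomodular : forall x y, ole M x y -> y = ojoin x (omeet y (operp M x))
}.

Definition sproj (m : M) : M -> M := fun x => omeet m (ojoin (operp M m) x).

Definition adjointable (f : M -> M) : Prop :=
  exists g : M -> M, forall x y, ole M (f x) (operp M y) <-> ole M x (operp M (g y)).
Definition LinT : Type := { f : M -> M | adjointable f }.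
Definition lin_id : LinT :=
  exist adjointable (fun x => x) (ex_intro (fun g : M -> M => forall x y, ole M x (operp M y) <-> ole M x (operp M (g y))) (fun x => x) (fun x y => iff_refl _)).
Definition mkLin (f : M -> M) : LinT := mksub adjointable lin_id f.
Definition lin_adj (f : LinT) : M -> M :=
  proj1_sig (constructive_indefinite_description _ (proj2_sig f)).

Definition Lin : IDAops := {|
  car := LinT;
  isup := fun F => mkLin (fun x => osup M (fun y => exists f, F f /\ y = proj1_sig f x));
  imul := fun f g => mkLin (fun x => proj1_sig f (proj1_sig g x));
  istar := fun f => mkLin (lin_adj f);
  itld := fun f => mkLin (sproj (operp M (proj1_sig f otop)));
  iunit := lin_id
|}.

Section PL.
Variable L : LinT -> Prop.
Definition PLT : Type := { A : LinT -> Prop | forall a, A a -> L a }.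
Definition PL_empty : PLT :=
  exist (fun A : LinT -> Prop => forall a, A a -> L a) (fun _ => False) (fun a (h : False) => False_ind _ h).
Definition mkPL (A : LinT -> Prop) : PLT :=
  mksub (fun A : LinT -> Prop => forall a, A a -> L a) PL_empty A.
Definition PL : IDAops := {|
  car := PLT;
  isup := fun FF => mkPL (fun a => exists A, FF A /\ proj1_sig A a);
  imul := fun A B => mkPL (fun c => exists a b,
            proj1_sig A a /\ proj1_sig B b /\ c = imul Lin a b);
  istar := fun A => mkPL (fun c => exists a, proj1_sig A a /\ c = istar Lin a);
  itld := fun A => mkPL (fun c => c = mkLin (sproj (operp M
            (osup M (fun y => exists a, proj1_sig A a /\ y = proj1_sig a otop)))));
  iunit := mkPL (fun c => c = lin_id)
|}.
Definition PL_single (f : LinT) : PLT := mkPL (fun g => g = f).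
End PL.
End OLdefs.

Section Tests.
Variable K : IDAops.
Definition is_test (x : K) : Prop := exists k, x = itld K k.
Definition TestT : Type := { x : K | is_test x }.
Definition tsup (W : TestT -> Prop) : TestT :=
  exist is_test (itld K (itld K (isup K (image (@proj1_sig _ _) W))))
        (ex_intro _ _ eq_refl).
Definition tperp (w : TestT) : TestT :=
  exist is_test (itld K (proj1_sig w)) (ex_intro _ _ eq_refl).
Definition tle (k l : TestT) : Prop := proj1_sig (tsup (pair2 k l)) = proj1_sig l.
Definition TestOL : cOL := {| ocar := TestT; ole := tle; operp := tperp; osup := tsup |}.

Definition bullet (k : K) (v : TestT) : TestT :=
  exist is_test (itld K (itld K (imul K k (proj1_sig v)))) (ex_intro _ _ eq_refl).
Definition tequiv (k l : K) : Prop := forall w : TestT, bullet k w = bullet l w.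
End Tests.

(* ---------- functors 𝒯 : IDA → IM (object part is a subset 𝒯(K) ⊆ K) ---------- *)
Definition Tfun : Type := forall K : IDAops, K -> Prop.

Definition LinTest (K : IDAops) : IDAops := Lin (TestOL K).

Definition T1 (T : Tfun) : Prop :=
  forall K : IDAops, is_IDA K ->
    (forall x, is_test x -> T K x) /\
    (forall x y, T K x -> T K y -> T K (imul K x y)) /\
    (forall x, T K x -> T K (istar K x)) /\
    T K (iunit K).

Definition T2 (T : Tfun) : Prop :=
  forall K : IDAops, is_IDA K -> is_cOML (TestOL K) ->
    (forall s t, T K s -> T K t -> (s = t <-> tequiv s t)) ->
    let phi := fun k : K => @mkLin (TestOL K) (bullet k) in
    (forall k, T K k -> @adjointable (TestOL K) (bullet k) /\ T (LinTest K) (phi k)) /\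
    (forall k l, T K k -> T K l -> phi k = phi l -> k = l) /\
    (forall g, T (LinTest K) g -> exists k, T K k /\ phi k = g) /\
    (forall k l, T K k -> T K l -> phi (imul K k l) = imul (LinTest K) (phi k) (phi l)) /\
    (forall k, T K k -> phi (istar K k) = istar (LinTest K) (phi k)) /\
    phi (iunit K) = iunit (LinTest K).

Definition T3 (T : Tfun) : Prop :=
  forall M : cOL, is_cOML M ->
    let L := T (Lin M) in
    let P := PL L in
    let psi := fun f => PL_single L f in
    (forall f, L f -> T P (psi f)) /\
    (forall f g, L f -> L g -> psi f = psi g -> f = g) /\
    (forall A, T P A -> exists f, L f /\ psi f = A) /\
    (forall f g, L f -> L g -> psi (imul (Lin M) f g) = imul P (psi f) (psi g)) /\
    (forall f, L f -> psi (istar (Lin M) f) = istar P (psi f)) /\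
    psi (iunit (Lin M)) = iunit P.

(* (T4): 𝒯(f) is the restriction of f (in particular f maps 𝒯(K) into 𝒯(L)) *)
Definition T4 (T : Tfun) : Prop :=
  forall (K L : IDAops) (f : K -> L), is_IDA K -> is_IDA L -> ida_morphism f ->
    forall x, T K x -> T L (f x).

Definition TODA (T : Tfun) (K : IDAops) : Prop :=
  is_IDA K /\
  is_cOML (TestOL K) /\
  (forall A : K -> Prop,
                 (forall x, T K x -> A x) ->
                 (forall x y, A x -> A y -> A (imul K x y)) ->
                 (forall x, A x -> A (istar K x)) ->
                 (forall S, (forall x, S x -> A x) -> A (isup K S)) ->
                 forall x, A x) /\
  (forall S U : K -> Prop,
                 (forall x, S x -> T K x) -> (forall x, U x -> T K x) ->
                 (isup K S = isup K U <-> (forall x, S x <-> U x))) /\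
  (forall s t, T K s -> T K t -> (s = t <-> tequiv s t)).

Definition PTKT (T : Tfun) (K : IDAops) : Type :=
  { A : K -> Prop | forall x, A x -> T K x }.
Definition PTK_empty (T : Tfun) (K : IDAops) : PTKT T K :=
  exist (fun A : K -> Prop => forall x, A x -> T K x) (fun _ => False)
        (fun x (h : False) => False_ind _ h).
Definition mkPTK (T : Tfun) (K : IDAops) (A : K -> Prop) : PTKT T K :=
  mksub (fun A : K -> Prop => forall x, A x -> T K x) (PTK_empty T K) A.
Arguments mkPTK : clear implicits.
Arguments PTK_empty : clear implicits.
Definition hK (T : Tfun) (K : IDAops) (v : K) : PTKT T K :=
  exist (fun A : K -> Prop => forall x, A x -> T K x)
        (fun w => T K w /\ @ile K w v) (fun w (h : T K w /\ @ile K w v) => proj1 h).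
Arguments hK : clear implicits.
Definition PTK (T : Tfun) (K : IDAops) : IDAops := {|
  car := PTKT T K;
  isup := fun FF => mkPTK T K (fun x => exists A, FF A /\ proj1_sig A x);
  imul := fun A B => hK T K (imul K (isup K (proj1_sig A)) (isup K (proj1_sig B)));
  istar := fun A => hK T K (istar K (isup K (proj1_sig A)));
  itld := fun A => hK T K (itld K (isup K (proj1_sig A)));
  iunit := mkPTK T K (fun x => x = iunit K)
|}.

Definition PTLin (T : Tfun) (K : IDAops) : IDAops := PL (T (LinTest K)).

(* Main.v *)
Require Import Defs.
From Stdlib Require Import FunctionalExtensionality PropExtensionality ProofIrrelevance ClassicalEpsilon.

Lemma sig_ext {A} {P : A -> Prop} (a b : sig P) : proj1_sig a = proj1_sig b -> a = b.
Proof. destruct a, b; simpl; intros ->; f_equal; apply proof_irrelevance. Qed.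

Lemma pred_ext {A} (P Q : A -> Prop) : (forall x, P x <-> Q x) -> P = Q.
Proof. intros H; apply functional_extensionality; intros; apply propositional_extensionality; auto. Qed.

Lemma mksub_val {A} (P : A -> Prop) d x : P x -> proj1_sig (mksub P d x) = x.
Proof. intros H; unfold mksub; destruct excluded_middle_informative; simpl; tauto. Qed.

Lemma image_image {A B C} (h1 : A -> B) (h2 : B -> C) S :
  image h2 (image h1 S) = image (fun x => h2 (h1 x)) S.
Proof. apply pred_ext; intros z; split.
  - intros [y [[x [Hx ->]] ->]]; exists x; auto.
  - intros [x [Hx ->]]; exists (h1 x); split; auto; exists x; auto. Qed.

Lemma image_ext {A B} (h1 h2 : A -> B) S : (forall x, h1 x = h2 x) -> image h1 S = image h2 S.
Proof. intros H; apply pred_ext; intros z; split; intros [x [Hx ->]]; exists x; rewrite ?H; auto. Qed.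

Lemma image_comm {A B C D} (f : A -> B) (h : B -> D) (k : A -> C) (f' : C -> D) S :
  (forall z, h (f z) = f' (k z)) -> image h (image f S) = image f' (image k S).
Proof. intros H; rewrite !image_image; apply image_ext; auto. Qed.

Section IDAlemmas.
Variable K : IDAops.
Hypothesis HK : is_IDA K.

Lemma sup_single (x : K) : isup K (fun z => z = x) = x.
Proof. apply (ile_anti HK). apply (isup_least HK); intros z ->; apply (ile_refl HK).
  apply (isup_ub HK); reflexivity. Qed.

Lemma sup_mono (P Q : K -> Prop) : (forall x, P x -> Q x) -> ile (isup K P) (isup K Q).
Proof. intros H; apply (isup_least HK); intros x Hx; apply (isup_ub HK); auto. Qed.

Lemma sup_mul (S U : K -> Prop) : imul K (isup K S) (isup K U) =
  isup K (fun z => exists s u, S s /\ U u /\ z = imul K s u).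
Proof. apply (ile_anti HK).
  - rewrite (imul_supl HK). apply (isup_least HK). intros z [s [Hs ->]].
    rewrite (imul_supr HK). apply (isup_least HK). intros z [u [Hu ->]].
    apply (isup_ub HK). exists s, u; auto.
  - apply (isup_least HK). intros z [s [u [Hs [Hu ->]]]].
    apply (ile_trans HK) with (imul K s (isup K U)).
    + rewrite (imul_supr HK). apply (isup_ub HK). exists u; auto.
    + rewrite (imul_supl HK (isup K U)). apply (isup_ub HK). exists s; auto. Qed.

Lemma tld3 (x : K) : itld K (itld K (itld K x)) = itld K x.
Proof. pose proof (itld_ax1 HK (iunit K) x) as H. rewrite !(imul_1l HK) in H. exact H. Qed.

End IDAlemmas.

Section Transport.
Variables K L : IDAops.
Variable f : K -> L.
Variable g : L -> K.
Hypothesis Hf : ida_morphism f.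
Hypothesis fg : forall y, f (g y) = y.
Hypothesis gf : forall x, g (f x) = x.

Let fsup : forall S, f (isup K S) = isup L (image f S). Proof. apply Hf. Qed.
Let fmul : forall x y, f (imul K x y) = imul L (f x) (f y). Proof. apply Hf. Qed.
Let fstar : forall x, f (istar K x) = istar L (f x). Proof. apply Hf. Qed.
Let funit : f (iunit K) = iunit L. Proof. apply Hf. Qed.
Let ftld : forall x, f (itld K x) = itld L (f x). Proof. apply Hf. Qed.

Lemma f_inj x y : f x = f y -> x = y.
Proof. intros H; rewrite <- (gf x), <- (gf y), H; auto. Qed.

Lemma img_pre (S : L -> Prop) : S = image f (fun x => S (f x)).
Proof. apply pred_ext; intros y; split.
  - intros H; exists (g y); rewrite fg; auto.
  - intros [x [Hx ->]]; auto. Qed.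

Lemma g_morph : ida_morphism g.
Proof. repeat split.
  - intros S; apply f_inj; rewrite fg, fsup, image_image.
    rewrite (image_ext _ (fun x => x)) by auto. apply f_equal; apply pred_ext; intros y; split.
    + intros H; exists y; auto.
    + intros [x [Hx ->]]; auto.
  - intros x y; apply f_inj; rewrite fmul, !fg; auto.
  - intros x; apply f_inj; rewrite fstar, !fg; auto.
  - apply f_inj; rewrite fg, funit; auto.
  - intros x; apply f_inj; rewrite ftld, !fg; auto. Qed.

Lemma f_pair x y : pair2 (f x) (f y) = image f (pair2 x y).
Proof. apply pred_ext; intros z; split.
  - intros [-> | ->]; [exists x | exists y]; split; auto; red; auto.
  - intros [w [[-> | ->] ->]]; red; auto. Qed.

Lemma f_ijoin x y : f (ijoin x y) = ijoin (f x) (f y).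
Proof. unfold ijoin; rewrite f_pair, fsup; auto. Qed.

Lemma f_ile x y : ile (f x) (f y) <-> ile x y.
Proof. unfold ile; rewrite f_pair, <- fsup; split; intros H.
  - apply f_inj; auto.
  - rewrite H; auto. Qed.

Ltac liftL y := rewrite <- (fg y); generalize (g y); clear y; intro y.
Ltac liftS S := rewrite (img_pre S); generalize (fun x => S (f x)); clear S; intro S.
Ltac foldf := repeat (rewrite <- ftld || rewrite <- fmul || rewrite <- fstar || rewrite <- f_ijoin || rewrite <- fsup).

Lemma transport_IDA : is_IDA K -> is_IDA L.
Proof. intros HK; constructor.
  - intros y; liftL y; apply f_ile; apply (ile_refl HK).
  - intros y z; liftL y; liftL z; rewrite !f_ile; intros; f_equal; apply (ile_anti HK); auto.
  - intros x y z; liftL x; liftL y; liftL z; rewrite !f_ile; apply (ile_trans HK).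
  - intros S; liftS S; intros y; liftL y; intros [x [Hx Hxy]]. apply f_inj in Hxy; subst.
    foldf; apply f_ile; apply (isup_ub HK); auto.
  - intros S; liftS S; intros u; liftL u; intros H; foldf; apply f_ile; apply (isup_least HK).
    intros x Hx; apply f_ile; apply H; exists x; auto.
  - intros x y z; liftL x; liftL y; liftL z; foldf; f_equal; apply (imul_assoc HK).
  - intros x S; liftL x; liftS S. rewrite (image_comm f _ (imul K x) f) by (intros; rewrite fmul; auto).
    foldf; f_equal; apply (imul_supr HK).
  - intros x S; liftL x; liftS S. rewrite (image_comm f _ (fun y => imul K y x) f) by (intros; rewrite fmul; auto).
    foldf; f_equal; apply (imul_supl HK).
  - intros x; liftL x; rewrite <- funit; foldf; f_equal; apply (imul_1l HK).
  - intros x; liftL x; rewrite <- funit; foldf; f_equal; apply (imul_1r HK).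
  - intros x; liftL x; foldf; f_equal; apply (istarK HK).
  - intros x y; liftL x; liftL y; foldf; f_equal; apply (istar_mul HK).
  - intros S; liftS S. rewrite (image_comm f _ (istar K) f) by (intros; rewrite fstar; auto).
    foldf; f_equal; apply (istar_sup HK).
  - intros x y; liftL x; liftL y; foldf; f_equal; apply (itld_ax1 HK).
  - intros S; liftS S. rewrite (image_comm f _ (fun x => itld K (itld K x)) f) by (intros; rewrite !ftld; auto).
    foldf; f_equal; apply (itld_ax2 HK).
  - intros x; liftL x; foldf; f_equal; apply (itld_ax3 HK).
  - intros x y; liftL x; liftL y; foldf; f_equal; apply (itld_ax4 HK).
Qed.

End Transport.

Section OLTransport.
Variables M N : cOL.
Variable a : M -> N.
Variable b : N -> M.
Hypothesis ab : forall y, a (b y) = y.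
Hypothesis ba : forall x, b (a x) = x.
Hypothesis a_le : forall x y, ole N (a x) (a y) <-> ole M x y.
Hypothesis a_perp : forall x, a (operp M x) = operp N (a x).
Hypothesis a_sup : forall S, a (osup M S) = osup N (image a S).

Lemma a_inj x y : a x = a y -> x = y.
Proof. intros H; rewrite <- (ba x), <- (ba y), H; auto. Qed.

Lemma a_img_pre (S : N -> Prop) : S = image a (fun x => S (a x)).
Proof. apply pred_ext; intros y; split.
  - intros H; exists (b y); rewrite ab; auto.
  - intros [x [Hx ->]]; auto. Qed.

Lemma a_ojoin x y : a (ojoin x y) = ojoin (a x) (a y).
Proof. unfold ojoin; rewrite a_sup; f_equal; apply pred_ext; intros z; split.
  - intros [w [[-> | ->] ->]]; red; auto.
  - intros [-> | ->]; [exists x | exists y]; split; auto; red; auto. Qed.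

Lemma a_otop : a (otop M) = otop N.
Proof. unfold otop; rewrite a_sup; f_equal; apply pred_ext; intros z; split; auto.
  intros _; exists (b z); auto. Qed.

Lemma a_omeet x y : a (omeet x y) = omeet (a x) (a y).
Proof. unfold omeet; rewrite a_perp, a_ojoin, !a_perp; auto. Qed.

Ltac liftN y := rewrite <- (ab y); generalize (b y); clear y; intro y.
Ltac liftNS S := rewrite (a_img_pre S); generalize (fun x => S (a x)); clear S; intro S.
Ltac folda := repeat (rewrite <- a_perp || rewrite <- a_ojoin || rewrite <- a_omeet || rewrite <- a_otop || rewrite <- a_sup).

Lemma transport_cOML : is_cOML M -> is_cOML N.
Proof. intros HM; constructor.
  - intros x; liftN x; apply a_le; apply (ole_refl HM).
  - intros x y; liftN x; liftN y; rewrite !a_le; intros; f_equal; apply (ole_anti HM); auto.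
  - intros x y z; liftN x; liftN y; liftN z; rewrite !a_le; apply (ole_trans HM).
  - intros S; liftNS S; intros y; liftN y; intros [x [Hx Hxy]]. apply a_inj in Hxy; subst.
    folda; apply a_le; apply (osup_ub HM); auto.
  - intros S; liftNS S; intros u; liftN u; intros H; folda; apply a_le; apply (osup_least HM).
    intros x Hx; apply a_le; apply H; exists x; auto.
  - intros x; liftN x; folda; f_equal; apply (operpK HM).
  - intros x y; liftN x; liftN y; folda; rewrite !a_le; apply (operp_anti HM).
  - intros x; liftN x; folda; f_equal; apply (ojoin_perp HM).
  - intros x y; liftN x; liftN y; rewrite a_le; intros H; folda; f_equal; apply (orthomodular HM); auto.
Qed.
End OLTransport.

Lemma pair_image {A B} (h : A -> B) x y : pair2 (h x) (h y) = image h (pair2 x y).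
Proof. apply pred_ext; intros z; split.
  - intros [-> | ->]; [exists x | exists y]; split; auto; red; auto.
  - intros [w [[-> | ->] ->]]; red; auto. Qed.

Section TODATransport.
Variable T : Tfun.
Hypothesis HT4 : T4 T.
Variables K L : IDAops.
Variable f : K -> L.
Variable g : L -> K.
Hypothesis Hf : ida_morphism f.
Hypothesis fg : forall y, f (g y) = y.
Hypothesis gf : forall x, g (f x) = x.
Hypothesis HK : is_IDA K.

Let HL : is_IDA L := transport_IDA K L f g Hf fg gf HK.
Let Hg : ida_morphism g := g_morph K L f g Hf fg gf.
Let fsup : forall S, f (isup K S) = isup L (image f S). Proof. apply Hf. Qed.
Let fmul : forall x y, f (imul K x y) = imul L (f x) (f y). Proof. apply Hf. Qed.
Let fstar : forall x, f (istar K x) = istar L (f x). Proof. apply Hf. Qed.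
Let ftld : forall x, f (itld K x) = itld L (f x). Proof. apply Hf. Qed.
Let gtld : forall x, g (itld L x) = itld K (g x). Proof. apply Hg. Qed.

Lemma T_f x : T K x <-> T L (f x).
Proof. split; intros H.
  - apply (HT4 K L f HK HL Hf); auto.
  - rewrite <- (gf x); apply (HT4 L K g HL HK Hg); auto. Qed.

Lemma test_f x : is_test x -> is_test (f x).
Proof. intros [k ->]; exists (f k); auto. Qed.
Lemma test_g x : is_test x -> is_test (g x).
Proof. intros [k ->]; exists (g k); auto. Qed.

Definition tf (t : TestT K) : TestT L := exist _ (f (proj1_sig t)) (test_f _ (proj2_sig t)).
Definition tg (t : TestT L) : TestT K := exist _ (g (proj1_sig t)) (test_g _ (proj2_sig t)).

Lemma tf_tg t : tf (tg t) = t. Proof. apply sig_ext; simpl; auto. Qed.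
Lemma tg_tf t : tg (tf t) = t. Proof. apply sig_ext; simpl; auto. Qed.
Lemma tf_perp t : tf (tperp t) = tperp (tf t). Proof. apply sig_ext; simpl; auto. Qed.
Lemma tf_sup W : tf (tsup W) = tsup (image tf W).
Proof. apply sig_ext; simpl. rewrite !ftld, fsup, !image_image; auto. Qed.
Lemma tf_le x y : tle (tf x) (tf y) <-> tle x y.
Proof. unfold tle. rewrite pair_image, <- tf_sup. simpl. split; intros H.
  - apply (f_inj K L f g gf); auto.
  - rewrite H; auto. Qed.
Lemma tf_bullet k w : tf (bullet k w) = bullet (f k) (tf w).
Proof. apply sig_ext; simpl. rewrite !ftld, fmul; auto. Qed.

Lemma tequiv_f s t : tequiv (f s) (f t) <-> tequiv s t.
Proof. unfold tequiv; split; intros H w.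
  - rewrite <- (tg_tf (bullet s w)), <- (tg_tf (bullet t w)), !tf_bullet, H; auto.
  - rewrite <- (tf_tg w), <- !tf_bullet, H; auto.
Qed.

Lemma transport_TODA : TODA T K -> TODA T L.
Proof. intros [_ [HO [H2 [H3 H4]]]]. split; [exact HL|]. split.
  { apply (transport_cOML (TestOL K) (TestOL L) tf tg tf_tg tg_tf tf_le tf_perp tf_sup HO). }
  split; [|split].
  - intros A HT Hm Hs Hsup y. rewrite <- (fg y). apply (H2 (fun x => A (f x))).
    + intros x Tx; apply HT; apply T_f; auto.
    + intros x z Ax Az; rewrite fmul; auto.
    + intros x Ax; rewrite fstar; auto.
    + intros S HS; rewrite fsup; apply Hsup; intros z [x [Hx ->]]; auto.
  - intros S U HS HU.
    assert (ES : isup L S = f (isup K (fun x => S (f x)))).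
    { rewrite fsup; f_equal; apply (img_pre K L f g fg). }
    assert (EU : isup L U = f (isup K (fun x => U (f x)))).
    { rewrite fsup; f_equal; apply (img_pre K L f g fg). }
    rewrite ES, EU.
    assert (E : isup K (fun x => S (f x)) = isup K (fun x => U (f x)) <-> (forall x, S (f x) <-> U (f x))).
    { apply H3; intros x Hx; apply T_f; auto. }
    split.
    + intros Heq y. rewrite <- (fg y). apply E. apply (f_inj K L f g gf); auto.
    + intros Hy. f_equal. apply E. intros x; apply Hy.
  - intros s t Ts Tt. rewrite <- (fg s), <- (fg t) in *. rewrite <- T_f in Ts, Tt.
    rewrite tequiv_f, <- H4 by auto. split; intros E; [apply (f_inj K L f g gf)|rewrite E]; auto.
Qed.

End TODATransport.

Lemma morph_comp (K L N : IDAops) (f : K -> L) (h : L -> N) :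
  ida_morphism f -> ida_morphism h -> ida_morphism (fun x => h (f x)).
Proof. intros [a1 [a2 [a3 [a4 a5]]]] [b1 [b2 [b3 [b4 b5]]]]; repeat split; intros;
  rewrite ?a1, ?a2, ?a3, ?a4, ?a5, ?b1, ?b2, ?b3, ?b4, ?b5, ?image_image; auto. Qed.

Lemma iso_of (K L : IDAops) (f : K -> L) (g : L -> K) :
  ida_morphism f -> (forall y, f (g y) = y) -> (forall x, g (f x) = x) -> ida_iso K L.
Proof. intros Hf fg gf; exists f; split; [auto|split].
  - apply (f_inj K L f g gf).
  - intros y; exists (g y); auto. Qed.

Section OML.
Variable M : cOL.
Hypothesis HM : is_cOML M.
Lemma join_le (a b : M) : ole M a b -> ojoin a b = b.
Proof. intros H; apply (ole_anti HM).
  - apply (osup_least HM); intros z [-> | ->]; auto; apply (ole_refl HM).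
  - apply (osup_ub HM); right; auto. Qed.
Lemma le_top (x : M) : ole M x (otop M).
Proof. apply (osup_ub HM); auto. Qed.
Lemma perp_top_le (z : M) : ole M (operp M (otop M)) z.
Proof. apply (ole_trans HM) with (operp M (operp M z)).
  - apply (operp_anti HM), le_top.
  - rewrite (operpK HM); apply (ole_refl HM). Qed.
Lemma sproj_top : sproj (otop M) = fun x => x.
Proof. apply functional_extensionality; intros x; unfold sproj, omeet.
  rewrite (join_le _ _ (perp_top_le x)), (join_le _ _ (perp_top_le _)), (operpK HM); auto. Qed.
End OML.

Lemma img_pair {A B} (h : A -> B) x y : image h (pair2 x y) = pair2 (h x) (h y).
Proof. symmetry; apply pair_image. Qed.

Lemma bullet_test (K : IDAops) (HK : is_IDA K) (m : TestT K) :
  bullet (proj1_sig m) = @sproj (TestOL K) m.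
Proof. apply functional_extensionality; intros x; apply sig_ext.
  destruct m as [mv [k ->]]. simpl.
  simpl. rewrite !img_pair. simpl. rewrite !img_pair. simpl. rewrite ?img_pair; simpl. rewrite !(tld3 K HK).
  rewrite <- (tld3 K HK k) at 1. rewrite (itld_ax4 HK). reflexivity.
Qed.

Section Main.
Variable T : Tfun.
Hypothesis HT1 : T1 T.
Hypothesis HT2 : T2 T.
Hypothesis HT4 : T4 T.
Variable K : IDAops.
Hypothesis HTODA : TODA T K.

Let HK : is_IDA K := proj1 HTODA.
Let HO : is_cOML (TestOL K) := proj1 (proj2 HTODA).
Let H2 := proj1 (proj2 (proj2 HTODA)).
Let H3 := proj1 (proj2 (proj2 (proj2 HTODA))).
Let H4 := proj2 (proj2 (proj2 (proj2 HTODA))).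

Lemma T_test x : is_test x -> T K x. Proof. apply (HT1 K HK). Qed.
Lemma T_mul x y : T K x -> T K y -> T K (imul K x y). Proof. apply (HT1 K HK). Qed.
Lemma T_star x : T K x -> T K (istar K x). Proof. apply (HT1 K HK). Qed.
Lemma T_unit : T K (iunit K). Proof. apply (HT1 K HK). Qed.

Definition hv (v : K) : K -> Prop := fun w => T K w /\ ile w v.

Lemma represent v : exists P, (forall x, P x -> T K x) /\ isup K P = v.
Proof. apply (H2 (fun v => exists P, (forall x, P x -> T K x) /\ isup K P = v)).
  - intros x Tx; exists (fun z => z = x); split; [intros z ->; auto | apply (sup_single K HK)].
  - intros x y [P [HP <-]] [Q [HQ <-]]. rewrite (sup_mul K HK).
    eexists; split; [|reflexivity]. intros z [s [u [Hs [Hu ->]]]]; apply T_mul; auto.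
  - intros x [P [HP <-]]. rewrite (istar_sup HK). eexists; split; [|reflexivity].
    intros z [s [Hs ->]]; apply T_star; auto.
  - intros S HS. exists (fun w => exists s P, S s /\ (forall x, P x -> T K x) /\ isup K P = s /\ P w).
    split.
    + intros w [s [P [_ [HP [_ Pw]]]]]; auto.
    + apply (ile_anti HK).
      * apply (isup_least HK). intros w [s [P [Ss [HP [<- Pw]]]]].
        apply (ile_trans HK) with (isup K P); [apply (isup_ub HK); auto|].
        apply (isup_ub HK); auto.
      * apply (isup_least HK). intros s Ss. destruct (HS s Ss) as [P [HP <-]].
        apply (sup_mono K HK). intros w Pw; exists (isup K P), P; auto.
Qed.

Lemma sup_hv v : isup K (hv v) = v.
Proof. apply (ile_anti HK).
  - apply (isup_least HK); intros w [_ H]; auto.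
  - destruct (represent v) as [P [HP <-]]. apply (sup_mono K HK).
    intros w Pw; split; auto; apply (isup_ub HK); auto. Qed.

Lemma sup_hv' v : isup K (fun w => T K w /\ ile w v) = v.
Proof. apply sup_hv. Qed.

Lemma uniq P v : (forall x, P x -> T K x) -> isup K P = v -> P = hv v.
Proof. intros HP Hv. apply pred_ext. apply H3; auto.
  - intros x [Tx _]; auto.
  - rewrite sup_hv; auto. Qed.

Lemma hv_T t : T K t -> hv t = (fun w => w = t).
Proof. intros Tt; symmetry; apply uniq. intros x ->; auto. apply (sup_single K HK). Qed.

Lemma hv_sup S : hv (isup K S) = (fun w => exists s, S s /\ hv s w).
Proof. symmetry; apply uniq.
  - intros w [s [_ [Tw _]]]; auto.
  - apply (ile_anti HK).
    + apply (isup_least HK). intros w [s [Ss [_ H]]]. apply (ile_trans HK) with s; auto.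
      apply (isup_ub HK); auto.
    + apply (isup_least HK). intros s Ss. rewrite <- (sup_hv s) at 1. apply (sup_mono K HK).
      intros w Hw; exists s; auto. Qed.

Lemma hv_mul x y : hv (imul K x y) = (fun w => exists k l, hv x k /\ hv y l /\ w = imul K k l).
Proof. symmetry; apply uniq.
  - intros w [k [l [[Tk _] [[Tl _] ->]]]]; apply T_mul; auto.
  - rewrite <- (sup_mul K HK), !sup_hv; auto. Qed.

Lemma hv_star x : hv (istar K x) = (fun w => exists k, hv x k /\ w = istar K k).
Proof. symmetry; apply uniq.
  - intros w [k [[Tk _] ->]]; apply T_star; auto.
  - pattern x at 2; rewrite <- (sup_hv x). rewrite (istar_sup HK). reflexivity. Qed.

Definition hinv (A : PTK T K) : K := isup K (proj1_sig A).

Lemma hK_val v : proj1_sig (hK T K v) = hv v. Proof. reflexivity. Qed.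

Lemma hK_morph : @ida_morphism K (PTK T K) (hK T K).
Proof. repeat split.
  - intros S; apply sig_ext. simpl. unfold mkPTK. rewrite mksub_val.
    + fold (hv (isup K S)). rewrite hv_sup. apply pred_ext; intros w; split.
      * intros [s [Ss Hw]]; exists (hK T K s); split; [exists s; auto | exact Hw].
      * intros [A [[s [Ss ->]] Hw]]; exists s; auto.
    + intros w [A [_ Hw]]; apply (proj2_sig A); auto.
  - intros x y; apply sig_ext; simpl. rewrite !sup_hv'. reflexivity.
  - intros x; apply sig_ext; simpl. rewrite !sup_hv'. reflexivity.
  - apply sig_ext; simpl. unfold mkPTK. rewrite mksub_val.
    + apply hv_T, T_unit.
    + intros x ->; apply T_unit.
  - intros x; apply sig_ext; simpl. rewrite !sup_hv'. reflexivity.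
Qed.

Lemma hK_hinv A : hK T K (hinv A) = A.
Proof. apply sig_ext; simpl. symmetry; apply uniq; [apply (proj2_sig A)|reflexivity]. Qed.
Lemma hinv_hK v : hinv (hK T K v) = v.
Proof. apply sup_hv. Qed.


Definition LL : LinT (TestOL K) -> Prop := T (LinTest K).
Definition phi (k : K) : LinT (TestOL K) := @mkLin (TestOL K) (bullet k).

Let T2K := HT2 K HK HO H4.
Lemma t2a k : T K k -> @adjointable (TestOL K) (bullet k) /\ LL (phi k).
Proof. exact (proj1 T2K k). Qed.
Lemma t2b k l : T K k -> T K l -> phi k = phi l -> k = l.
Proof. exact (proj1 (proj2 T2K) k l). Qed.
Lemma t2c g : LL g -> exists k, T K k /\ phi k = g.
Proof. exact (proj1 (proj2 (proj2 T2K)) g). Qed.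
Lemma t2d k l : T K k -> T K l -> phi (imul K k l) = imul (LinTest K) (phi k) (phi l).
Proof. exact (proj1 (proj2 (proj2 (proj2 T2K))) k l). Qed.
Lemma t2e k : T K k -> phi (istar K k) = istar (LinTest K) (phi k).
Proof. exact (proj1 (proj2 (proj2 (proj2 (proj2 T2K)))) k). Qed.
Lemma t2f : phi (iunit K) = iunit (LinTest K).
Proof. exact (proj2 (proj2 (proj2 (proj2 (proj2 T2K))))). Qed.

Lemma phi_val k : T K k -> proj1_sig (phi k) = bullet k.
Proof. intros Tk; unfold phi, mkLin; rewrite mksub_val; auto; apply t2a; auto. Qed.

Definition Psi (v : K) : PTLin T K := mkPL LL (fun c => exists k, hv v k /\ c = phi k).
Definition Phi (B : PTLin T K) : K := isup K (fun k => T K k /\ proj1_sig B (phi k)).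

Lemma Psi_val v : proj1_sig (Psi v) = (fun c => exists k, hv v k /\ c = phi k).
Proof. unfold Psi, mkPL; rewrite mksub_val; auto. intros a [k [[Tk _] ->]]; apply t2a; auto. Qed.

Lemma Phi_Psi v : Phi (Psi v) = v.
Proof. unfold Phi; rewrite Psi_val. pattern v at 2; rewrite <- (sup_hv v). f_equal. apply pred_ext; intros k; split.
  - intros [Tk [k' [[Tk' H] E]]]. apply t2b in E; auto. subst; split; auto.
  - intros [Tk H]; split; auto. exists k; split; [split|]; auto. Qed.

Lemma Psi_Phi B : Psi (Phi B) = B.
Proof. apply sig_ext; rewrite Psi_val.
  assert (E : hv (Phi B) = (fun k => T K k /\ proj1_sig B (phi k))).
  { symmetry; apply uniq; [intros x [Tx _]; auto | reflexivity]. }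
  rewrite E. apply pred_ext; intros c; split.
  - intros [k [[Tk Bk] ->]]; auto.
  - intros Bc. destruct (t2c c) as [k [Tk <-]]. apply (proj2_sig B); auto.
    exists k; auto. Qed.

Lemma otop_e : proj1_sig (otop (TestOL K)) = iunit K.
Proof. apply t2b.
  - apply T_test. apply (proj2_sig (otop (TestOL K))).
  - apply T_unit.
  - rewrite t2f. unfold phi. rewrite (bullet_test K HK), (sproj_top _ HO). apply sig_ext.
    unfold mkLin; rewrite mksub_val; auto. apply (proj2_sig (lin_id (TestOL K))). Qed.

Lemma otop_e' : proj1_sig (tsup (K:=K) (fun _ : TestT K => True)) = iunit K.
Proof. exact otop_e. Qed.

Lemma Psi_morph : @ida_morphism K (PTLin T K) Psi.
Proof. repeat split.
  - intros S; apply sig_ext. rewrite Psi_val. simpl. unfold mkPL; rewrite mksub_val.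
    + rewrite hv_sup. apply pred_ext; intros c; split.
      * intros [k [[s [Ss Hk]] ->]]. exists (Psi s); split; [exists s; auto|].
        rewrite Psi_val; exists k; auto.
      * intros [A [[s [Ss ->]] Hc]]. rewrite Psi_val in Hc. destruct Hc as [k [Hk ->]].
        exists k; split; auto; exists s; auto.
    + intros a [A [_ Ha]]; apply (proj2_sig A); auto.
  - intros x y; apply sig_ext. rewrite Psi_val. simpl. unfold mkPL; rewrite mksub_val.
    + rewrite hv_mul. apply pred_ext; intros c; split.
      * intros [m [[k [l [Hk [Hl ->]]]] ->]]. exists (phi k), (phi l).
        rewrite !Psi_val. split; [exists k; auto|]. split; [exists l; auto|].
        apply t2d; [apply Hk | apply Hl].
      * intros [a [b [Ha [Hb ->]]]]. rewrite Psi_val in Ha, Hb.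
        destruct Ha as [k [Hk ->]]; destruct Hb as [l [Hl ->]].
        exists (imul K k l); split; [exists k, l; auto|]. symmetry; apply t2d; [apply Hk | apply Hl].
    + intros c [a [b [Ha [Hb ->]]]]. rewrite Psi_val in Ha, Hb.
      destruct Ha as [k [Hk ->]]; destruct Hb as [l [Hl ->]].
      change (LL (imul (LinTest K) (phi k) (phi l))). rewrite <- t2d by (apply Hk || apply Hl).
      apply t2a, T_mul; [apply Hk | apply Hl].
  - intros x; apply sig_ext. rewrite Psi_val. simpl. unfold mkPL; rewrite mksub_val.
    + rewrite hv_star. apply pred_ext; intros c; split.
      * intros [m [[k [Hk ->]] ->]]. exists (phi k). rewrite !Psi_val. split; [exists k; auto|].
        apply t2e; apply Hk.
      * intros [a [Ha ->]]. rewrite Psi_val in Ha. destruct Ha as [k [Hk ->]].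
        exists (istar K k); split; [exists k; auto|]. symmetry; apply t2e; apply Hk.
    + intros c [a [Ha ->]]. rewrite Psi_val in Ha. destruct Ha as [k [Hk ->]].
      change (LL (istar (LinTest K) (phi k))). rewrite <- t2e by apply Hk.
      apply t2a, T_star; apply Hk.
  - apply sig_ext. rewrite Psi_val. simpl. unfold mkPL; rewrite mksub_val.
    + rewrite (hv_T _ T_unit). apply pred_ext; intros c; split.
      * intros [k [-> ->]]. apply t2f.
      * intros ->. exists (iunit K); split; auto. symmetry; apply t2f.
    + intros c ->. change (LL (iunit (LinTest K))). rewrite <- t2f. apply t2a, T_unit.
  - intros v. apply sig_ext. rewrite Psi_val. simpl.
    set (W := fun y : TestT K => exists a : LinT (TestOL K),
                      proj1_sig (Psi v) a /\
                      y = proj1_sig a (tsup (K:=K) (fun _ : TestT K => True))).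
    assert (Em : proj1_sig (tperp (tsup W)) = itld K v).
    { simpl. rewrite (tld3 K HK).
      assert (EW : image (@proj1_sig _ _) W = image (fun x => itld K (itld K x)) (hv v)).
      { apply pred_ext; intros z; split.
        - intros [y [[a [Ha ->]] ->]]. rewrite Psi_val in Ha. destruct Ha as [k [Hk ->]].
          exists k; split; auto. rewrite phi_val by apply Hk. unfold bullet; cbn [proj1_sig].
          rewrite otop_e', (imul_1r HK). reflexivity.
        - intros [k [Hk ->]]. exists (bullet k (tsup (fun _ => True))). split.
          + exists (phi k). split; [rewrite Psi_val; exists k; auto|]. rewrite phi_val by apply Hk; auto.
          + unfold bullet; cbn [proj1_sig]. rewrite otop_e', (imul_1r HK). reflexivity. }
      rewrite EW, (itld_ax2 HK), sup_hv. reflexivity. }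
    assert (Key : phi (itld K v) = @mkLin (TestOL K) (@sproj (TestOL K) (tperp (tsup W)))).
    { unfold phi. f_equal. rewrite <- (bullet_test K HK). rewrite Em. reflexivity. }
    match goal with |- _ = proj1_sig (mkPL _ (fun c => c = ?X)) => replace X with (phi (itld K v)) by (rewrite Key; reflexivity) end. unfold mkPL; rewrite mksub_val.
    + rewrite hv_T by (apply T_test; exists v; auto). apply pred_ext; intros c; split.
      * intros [k [-> ->]]; auto.
      * intros ->; exists (itld K v); auto.
    + intros c ->. apply t2a, T_test. exists v; auto.
Qed.


Lemma main_K : TODA T K /\ TODA T (PTLin T K) /\ TODA T (PTK T K) /\
    ida_iso K (PTLin T K) /\ ida_iso K (PTK T K) /\ ida_iso (PTLin T K) (PTK T K).
Proof.
  pose proof (g_morph K (PTLin T K) Psi Phi Psi_morph Psi_Phi Phi_Psi) as HPhi.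
  split; [exact HTODA|]. split.
  { exact (transport_TODA T HT4 K (PTLin T K) Psi Phi Psi_morph Psi_Phi Phi_Psi HK HTODA). }
  split.
  { exact (transport_TODA T HT4 K (PTK T K) (hK T K) hinv hK_morph hK_hinv hinv_hK HK HTODA). }
  split; [exact (iso_of K (PTLin T K) Psi Phi Psi_morph Psi_Phi Phi_Psi)|].
  split; [exact (iso_of K (PTK T K) (hK T K) hinv hK_morph hK_hinv hinv_hK)|].
  apply (iso_of (PTLin T K) (PTK T K) (fun B => hK T K (Phi B)) (fun A => Psi (hinv A))).
  - apply (morph_comp (PTLin T K) K (PTK T K) Phi (hK T K) HPhi hK_morph).
  - intros A; rewrite Phi_Psi, hK_hinv; auto.
  - intros B; rewrite hinv_hK, Psi_Phi; auto.
Qed.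
End Main.

Theorem corollary6p4 :
  forall T : Tfun, T1 T -> T2 T -> T3 T -> T4 T ->
  forall K : IDAops, TODA T K ->
    TODA T K /\ TODA T (PTLin T K) /\ TODA T (PTK T K) /\
    ida_iso K (PTLin T K) /\ ida_iso K (PTK T K) /\
    ida_iso (PTLin T K) (PTK T K).
Proof. intros T HT1 HT2 HT3 HT4 K HTODA. apply main_K; auto. Qed.
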